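(* The maximal number of periods that an active candidate will be in the work state is $\lg_X{n}$.
   Context: A broadcast network is modeled as a connected graph G(V,E) with n nodes. In the fragment-level leader election algorithm, nodes are partitioned into fragments each with a candidate; id(F) = (size, candidate identity) ordered lexicographically; external edges are directed from the larger-id to the smaller-id fragment. Initially each node is a size-1 fragment in state wait. A fragment whose external edges are all incoming enters work, counts its size new_size, and compares with its maximal neighbor F': if new_size > X · size(F') (X > 1) it remains active, updates its size, makes its external edges outgoing and returns to wait; otherwise it joins F'. A fragment with no external edges is the leader. It has been shown that if a fragment enters the work state at two consecutive times and remains active, with known size k_i at the first entry and size k_{i+1} after counting at the second, then k_{i+1} ≥ X^2 · k_i. *)

(* Defs.v *)
From Stdlib Require Import Reals Lra Lia.
Open Scope R_scope.

Definition logb (X y : R) : R := ln y / ln X.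

(** Abstract trace of the work periods of one candidate (fragment) during
    which it remains active, in a network of [n] nodes, parameter [X].
    For the i-th work period (i < t):
      - [s i] : the known size of the fragment when entering work,
      - [c i] : the counted size new_size,
      - [m i] : the size of its maximal neighbouring fragment F'.
    Conditions:
      - initially each node is a size-1 fragment, so the known size is >= 1;
      - fragments are non-empty sets of nodes, so [1 <= m i] and [c i <= n];
      - the fragment remains active: new_size > X * size(F');
      - it updates its size: the known size at the next entry is [c i];
      - the established lemma: k_{i+1} >= X^2 * k_i, where k_i is the known
        size at an entry and k_{i+1} the counted size at the next entry. *)
Definition active_work_trace (n : nat) (X : R) (t : nat)
  (s c m : nat -> nat) : Prop :=
  (1 <= s 0)%nat /\
  (forall i, (i < t)%nat ->
     (1 <= m i)%nat /\ INR (c i) > X * INR (m i) /\ (c i <= n)%nat) /\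
  (forall i, (i + 1 < t)%nat -> s (i + 1)%nat = c i) /\
  (forall i, (i + 1 < t)%nat -> INR (c (i + 1)%nat) >= X ^ 2 * INR (s i)).

(* Main.v *)
Require Import Defs.
From Stdlib Require Import Reals.
From Stdlib Require Import Lra Lia.
Open Scope R_scope.

Theorem corollary5 (n : nat) (X : R) (t : nat) (s c m : nat -> nat) :
  1 < X -> (1 <= n)%nat ->
  active_work_trace n X t s c m ->
  INR t <= logb X (INR n).
Proof.
  assert (ln_le : forall a b, 0 < a -> a <= b -> ln a <= ln b).
  { intros a b Ha Hab. destruct (Rle_lt_or_eq_dec a b Hab) as [H|H].
    - left. apply ln_increasing; lra.
    - subst; lra. }
  intros HX Hn [Hs0 [Hc [Hsc Hgr]]].
  assert (HXp : 0 < X) by lra.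
  assert (key : forall j, ((j < t)%nat -> X ^ (j + 1) <= INR (c j)) /\
                          ((j + 1 < t)%nat -> X ^ (j + 2) <= INR (c (j + 1)%nat))).
  { induction j as [|j [IH1 IH2]].
    - split.
      + intros H0. destruct (Hc 0%nat H0) as [Hm [Hcm _]].
        apply le_INR in Hm. simpl in Hm |- *. nra.
      + intros H1. specialize (Hgr 0%nat H1). apply le_INR in Hs0.
        simpl in Hs0, Hgr |- *. assert (0 <= X * X * (INR (s 0%nat) - 1)) by (apply Rmult_le_pos; nra). nra.
    - split.
      + intros H. replace (S j + 1)%nat with (j + 2)%nat by lia. replace (S j) with (j + 1)%nat by lia. apply IH2. lia.
      + intros H. specialize (Hgr (j + 1)%nat ltac:(lia)).
        rewrite (Hsc j ltac:(lia)) in Hgr.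
        specialize (IH1 ltac:(lia)).
        replace (S j + 1)%nat with (j + 1 + 1)%nat by lia.
        replace (S j + 2)%nat with (2 + (j + 1))%nat by lia.
        rewrite pow_add.
        assert (0 <= X ^ 2) by (apply pow_le; lra). nra. }
  unfold logb.
  assert (HlnX : 0 < ln X) by (rewrite <- ln_1; apply ln_increasing; lra).
  apply Rmult_le_reg_r with (ln X); [exact HlnX|].
  unfold Rdiv. rewrite Rmult_assoc, Rinv_l by lra. rewrite Rmult_1_r.
  destruct t as [|t'].
  - simpl. rewrite Rmult_0_l. rewrite <- ln_1. apply ln_le; [lra|].
    apply le_INR in Hn. simpl in Hn. lra.
  - destruct (key t') as [K _].
    specialize (K ltac:(lia)).
    destruct (Hc t' ltac:(lia)) as [_ [_ Hcn]].
    apply le_INR in Hcn.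
    replace (t' + 1)%nat with (S t') in K by lia.
    rewrite <- ln_pow by lra.
    apply ln_le; [apply pow_lt; lra | lra].
Qed.
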